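(* Let $(\mathcal{A},\{\mu_n\}_{n\ge1})$ be an $A_\infty$-algebra and $\mathcal{N}:\mathcal{A}\to\mathcal{A}$ a strict homotopy Nijenhuis operator on it. (i) For every $k\ge0$, $\mathcal{N}^k$ is a strict homotopy Nijenhuis operator on $(\mathcal{A},\{\mu_n\}_{n\ge1})$; hence one has the deformed $A_\infty$-algebra $(\mathcal{A},\{\mu_{n,\mathcal{N}^k}\}_{n\ge1})$. (ii) For all $k,l\ge0$, $\mathcal{N}^l$ is a strict homotopy Nijenhuis operator on the deformed $A_\infty$-algebra $(\mathcal{A},\{\mu_{n,\mathcal{N}^k}\}_{n\ge1})$.
   Context: Over a field of characteristic $0$. An $A_\infty$-algebra: graded vector space $\mathcal{A}$ with degree $n-2$ maps $\mu_n:\mathcal{A}^{\otimes n}\to\mathcal{A}$ such that for all $k\ge1$ and homogeneous $a_1,\dots,a_k$: $\sum_{m+n=k+1}\sum_{i=1}^m(-1)^{i(n+1)+n(|a_1|+\cdots+|a_{i-1}|)}\mu_m(a_1,\dots,a_{i-1},\mu_n(a_i,\dots,a_{i+n-1}),a_{i+n},\dots,a_k)=0$. For a degree $0$ linear map $\mathcal{P}$, $S\subseteq\{1,\dots,n\}$ and homogeneous $a_1,\dots,a_n$, write $\mu_n^{S,\mathcal{P}}(a_1,\dots,a_n)=\mu_n(c_1,\dots,c_n)$ with $c_i=a_i$ for $i\in S$, $c_i=\mathcal{P}(a_i)$ for $i\notin S$. $\mathcal{P}$ is a strict homotopy Nijenhuis operator on $(\mathcal{A},\{\mu_n\})$ if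 $\mu_n(\mathcal{P}a_1,\dots,\mathcal{P}a_n)=\sum_{j=1}^n(-1)^{j-1}\mathcal{P}^j\big(\sum_{|S|=j}\mu_n^{S,\mathcal{P}}(a_1,\dots,a_n)\big)$ for all $n\ge1$. The deformed $A_\infty$-algebra of such $\mathcal{P}$ has $\mu_{1,\mathcal{P}}=\mu_1$ and $\mu_{n,\mathcal{P}}(a_1,\dots,a_n)=\sum_{j=1}^n(-1)^{j-1}\mathcal{P}^{j-1}\big(\sum_{|S|=j}\mu_n^{S,\mathcal{P}}(a_1,\dots,a_n)\big)$ for $n\ge2$ (it is an $A_\infty$-algebra). $\mathcal{N}^0=\mathrm{Id}$. *)

(* Defs.v *)
From HB Require Import structures.
From mathcomp Require Import all_boot all_order all_algebra.
Set Implicit Arguments. Unset Strict Implicit. Unset Printing Implicit Defensive.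
Import GRing.Theory.
Local Open Scope ring_scope.

(* Conventions:
   - the graded vector space is a K-vector space V together with a predicate
     [h d v] = "v is homogeneous of degree d", where the subspaces
     {v | h d v} form a direct-sum decomposition of V ([is_grading]);
   - the n-ary operation mu_n(a_1,...,a_n) is [mu [:: a_1; ...; a_n]]
     (the arity is the length of the list; the value on [::] is never used);
   - P^j is [iter j P]. *)

Section Defs.
Variables (K : fieldType) (V : lmodType K).

Definition is_grading (h : int -> V -> Prop) : Prop :=
  [/\ (forall d, h d 0),
      (forall d (a : K) (x y : V), h d x -> h d y -> h d (a *: x + y)),
      (forall v : V, exists s : seq (int * V),
          [/\ uniq (map fst s), (forall p, p \in s -> h p.1 p.2)
            & v = \sum_(p <- s) p.2])
    & (forall s : seq (int * V), uniq (map fst s) ->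
          (forall p, p \in s -> h p.1 p.2) ->
          \sum_(p <- s) p.2 = 0 -> forall p, p \in s -> p.2 = 0)].

Definition homog_seq (h : int -> V -> Prop) (a : seq V) (ds : seq int) : Prop :=
  size a = size ds /\ forall j, (j < size a)%N -> h ds`_j a`_j.

Definition multilinear (mu : seq V -> V) : Prop :=
  forall (s : seq V) (i : nat) (c : K) (x y : V), (i < size s)%N ->
    mu (set_nth 0 s i (c *: x + y)) = c *: mu (set_nth 0 s i x) + mu (set_nth 0 s i y).

Definition linear_fun (P : V -> V) : Prop :=
  forall (c : K) (x y : V), P (c *: x + y) = c *: P x + P y.

Definition deg0 (h : int -> V -> Prop) (P : V -> V) : Prop :=
  forall d x, h d x -> h d (P x).

Definition mu_degree (h : int -> V -> Prop) (mu : seq V -> V) : Prop :=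
  forall (a : seq V) (ds : seq int), (1 <= size a)%N -> homog_seq h a ds ->
    h (\sum_(d <- ds) d + (size a)%:Z - 2) (mu a).

(* mu_m(a_1,...,a_{i-1}, mu_n(a_i,...,a_{i+n-1}), a_{i+n},...,a_k) *)
Definition insert_mu (mu : seq V -> V) (a : seq V) (i n : nat) : seq V :=
  take i.-1 a ++ mu (take n (drop i.-1 a)) :: drop (i.-1 + n) a.

Definition ainf_relations (h : int -> V -> Prop) (mu : seq V -> V) : Prop :=
  forall (k : nat) (a : seq V) (ds : seq int), (1 <= k)%N -> size a = k ->
    homog_seq h a ds ->
    \sum_(1 <= n < k.+1) \sum_(1 <= i < (k.+1 - n).+1)
       ((-1) ^ ((i * (n + 1))%:Z + n%:Z * \sum_(j < i.-1) ds`_j)) *: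
          mu (insert_mu mu a i n) = 0.

Definition is_Ainf (h : int -> V -> Prop) (mu : seq V -> V) : Prop :=
  [/\ multilinear mu, mu_degree h mu & ainf_relations h mu].

Definition substS (P : V -> V) (n : nat) (a : seq V) (S : {set 'I_n}) : seq V :=
  [seq (if i \in S then a`_i else P a`_i) | i <- enum 'I_n].

Definition sumS (mu : seq V -> V) (P : V -> V) (a : seq V) (j : nat) : V :=
  \sum_(S : {set 'I_(size a)} | #|S| == j) mu (substS P a S).

Definition strict_homotopy_Nijenhuis (h : int -> V -> Prop) (mu : seq V -> V)
    (P : V -> V) : Prop :=
  [/\ linear_fun P, deg0 h P &
    forall (a : seq V) (ds : seq int), (1 <= size a)%N -> homog_seq h a ds ->
      mu (map P a) =
      \sum_(1 <= j < (size a).+1) ((-1) ^+ j.-1) *: iter j P (sumS mu P a j)].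

Definition deformed (mu : seq V -> V) (P : V -> V) (a : seq V) : V :=
  if (size a <= 1)%N then mu a
  else \sum_(1 <= j < (size a).+1) ((-1) ^+ j.-1) *: iter j.-1 P (sumS mu P a j).

End Defs.

(* Main.v *)
Require Import Defs.
From HB Require Import structures.
From mathcomp Require Import all_boot all_order all_algebra.
From mathcomp.multinomials Require Import mpoly.
Set Implicit Arguments. Unset Strict Implicit. Unset Printing Implicit Defensive.
Import GRing.Theory.
Local Open Scope ring_scope.

Section Gen.
Variables (K : fieldType) (V : lmodType K).

Lemma lin0 (P : V -> V) : linear_fun P -> P 0 = 0.
Proof.
move=> lP; have H := lP 1 0 0; rewrite !scale1r addr0 in H.
by apply: (addrI (P 0)); rewrite addr0 -H.
Qed.

Lemma linD (P : V -> V) : linear_fun P -> forall x y, P (x + y) = P x + P y.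
Proof. by move=> lP x y; rewrite -[x]scale1r lP !scale1r. Qed.

Lemma linZ (P : V -> V) : linear_fun P -> forall c x, P (c *: x) = c *: P x.
Proof. by move=> lP c x; rewrite -[c *: x]addr0 lP (lin0 lP) addr0. Qed.

Lemma lin_iter (P : V -> V) k : linear_fun P -> linear_fun (iter k P).
Proof.
move=> lP; elim: k => [|k IH] c x y //=.
by rewrite IH lP.
Qed.

Lemma lin_sum (P : V -> V) (I : Type) (r : seq I) (p : pred I) (F : I -> V) :
  linear_fun P -> P (\sum_(i <- r | p i) F i) = \sum_(i <- r | p i) P (F i).
Proof. by move=> lP; apply: (big_morph P (linD lP) (lin0 lP)). Qed.

Lemma seq_enum (c : seq V) n : size c = n -> [seq c`_i | i : 'I_n <- enum 'I_n] = c.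
Proof.
move=> <-.
rewrite (map_comp (nth 0 c) val) val_enum_ord.
by have := mkseq_nth 0 c; rewrite /mkseq.
Qed.

Lemma nth_enum n (f : 'I_n -> V) (i : 'I_n) : [seq f j | j <- enum 'I_n]`_i = f i.
Proof.
by rewrite (nth_map i) ?size_enum_ord // nth_ord_enum.
Qed.

Lemma CP n (F : nat -> {set 'I_n} -> V) :
  \sum_(1 <= j < n.+1) \sum_(J : {set 'I_n} | #|J| == j) F j J =
  \sum_(J : {set 'I_n} | J != set0) F #|J| J.
Proof.
transitivity (\sum_(1 <= j < n.+1) \sum_(J : {set 'I_n})
   (if j == #|J| then F #|J| J else 0)).
  apply: eq_bigr => j _; rewrite big_mkcond; apply: eq_bigr => J _.
  by rewrite eq_sym; case: eqP => // ->.
rewrite exchange_big /= [RHS]big_mkcond; apply: eq_bigr => J _.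
rewrite -big_mkcond big_nat1_eq -card_gt0.
have : (#|J| < n.+1)%N by rewrite ltnS; have := max_card J; rewrite card_ord.
by move=> ->; rewrite andbT.
Qed.

Definition sumSg (mu : seq V -> V) (Q : V -> V) (c : seq V) m j :=
  \sum_(J : {set 'I_m} | #|J| == j)
     mu [seq (if i \in J then c`_i else Q c`_i) | i <- enum 'I_m].

Lemma SetForm (mu' : seq V -> V) (Q : V -> V) (c : seq V) n :
  linear_fun Q -> size c = n ->
  \sum_(J : {set 'I_n}) (-1) ^+ #|J| *: iter #|J| Q
     (mu' [seq (if i \in J then c`_i else Q c`_i) | i <- enum 'I_n]) =
  mu' (map Q c) - \sum_(1 <= j < (size c).+1) (-1) ^+ j.-1 *: iter j Q (sumS mu' Q c j).
Proof.
move=> lQ Hc.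
have E : forall j, sumS mu' Q c j = sumSg mu' Q c (size c) j by [].
rewrite (eq_bigr (fun j => (-1) ^+ j.-1 *: iter j Q (sumSg mu' Q c (size c) j)));
  last by move=> j _; rewrite E.
rewrite Hc (bigD1 set0) //= cards0 expr0 scale1r /=.
under eq_map => i do rewrite in_set0.
rewrite (map_comp Q (fun i : 'I_n => c`_i)) seq_enum //; congr (_ + _).
rewrite /sumSg.
rewrite (eq_bigr (fun j => \sum_(J : {set 'I_n} | #|J| == j) (-1) ^+ j.-1 *: iter j Q
     (mu' [seq (if i \in J then c`_i else Q c`_i) | i <- enum 'I_n]))); last first.
  by move=> j _; rewrite (lin_sum _ _ _ (lin_iter j lQ)) scaler_sumr.
rewrite CP -sumrN; apply: eq_bigr => J.
rewrite -card_gt0; case: #|J| => // m _ /=.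
by rewrite exprS mulN1r scaleNr.
Qed.

Lemma deformedE (mu' : seq V -> V) (Q : V -> V) (c : seq V) n :
  linear_fun Q -> size c = n -> (0 < n)%N ->
  deformed mu' Q c = \sum_(J : {set 'I_n} | J != set0) (-1) ^+ #|J|.-1 *:
     iter #|J|.-1 Q (mu' [seq (if i \in J then c`_i else Q c`_i) | i <- enum 'I_n]).
Proof.
move=> lQ Hc n0; rewrite /deformed.
have E : forall j, sumS mu' Q c j = sumSg mu' Q c (size c) j by [].
case: ifP => Hs.
  have n1 : n = 1%N by apply/eqP; rewrite eqn_leq n0 andbT -Hc Hs.
  have Hc1 : size c = 1%N by rewrite Hc n1.
  clear Hc n0 Hs; subst n.
  rewrite (big_pred1 setT); last first.
    by move=> J /=; rewrite -card_gt0 [J == _]eqEcard subsetT cardsT card_ord.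
  rewrite cardsT card_ord /= expr0 scale1r.
  under eq_map => i do rewrite in_setT.
  by rewrite seq_enum.
under eq_bigr => j _ do rewrite E.
rewrite Hc /sumSg.
under eq_bigr => j _ do rewrite (lin_sum _ _ _ (lin_iter j.-1 lQ)) scaler_sumr.
by rewrite CP.
Qed.

End Gen.

Section Phi.
Variables (K : fieldType) (V : lmodType K) (mu : seq V -> V) (P : V -> V).
Hypothesis lP : linear_fun P.
Variable a : seq V.
Local Notation n := (size a).

Definition wd (i : 'I_n) : 'I_n.+1 := widen_ord (leqnSn n) i.

Definition T (m : 'X_{1..n.+1}) : V :=
  iter (m ord_max) P (mu [seq iter (m (wd i)) P a`_i | i <- enum 'I_n]).

Definition phi (p : {mpoly K[n.+1]}) : V := \sum_(m <- msupp p) p@_m *: T m.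

Lemma T_eq (m : 'X_{1..n.+1}) r (e : 'I_n -> nat) : m ord_max = r -> (forall i, m (wd i) = e i) ->
  T m = iter r P (mu [seq iter (e i) P a`_i | i <- enum 'I_n]).
Proof. by move=> Hr He; rewrite /T Hr; under eq_map => i do rewrite He. Qed.

Lemma phi_sub p s : uniq s -> {subset msupp p <= s} ->
  phi p = \sum_(m <- s) p@_m *: T m.
Proof.
move=> us sub; rewrite /phi [RHS](bigID (fun m => m \in msupp p)) /=.
rewrite [X in _ = _ + X]big1 ?addr0; last first.
  by move=> m /memN_msupp_eq0 ->; rewrite scale0r.
rewrite -[in RHS]big_filter; apply: perm_big.
apply: uniq_perm; [exact: msupp_uniq | exact: filter_uniq |] => m.
rewrite mem_filter; case H: (m \in msupp p) => //=.
by rewrite (sub _ H).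
Qed.

Lemma phiD p q : phi (p + q) = phi p + phi q.
Proof.
set s := undup (msupp p ++ msupp q ++ msupp (p + q)).
have us : uniq s by apply: undup_uniq.
rewrite (phi_sub (s := s)) //; last by move=> m H; rewrite mem_undup !mem_cat H !orbT.
rewrite (phi_sub (p := p) (s := s)) //; last by move=> m H; rewrite mem_undup !mem_cat H.
rewrite (phi_sub (p := q) (s := s)) //; last by move=> m H; rewrite mem_undup !mem_cat H !orbT.
rewrite -big_split; apply: eq_bigr => m _.
by rewrite mcoeffD scalerDl.
Qed.

Lemma phiZ c p : phi (c *: p) = c *: phi p.
Proof.
set s := undup (msupp p ++ msupp (c *: p)).
have us : uniq s by apply: undup_uniq.
rewrite (phi_sub (s := s)) //; last by move=> m H; rewrite mem_undup !mem_cat H !orbT.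
rewrite (phi_sub (p := p) (s := s)) //; last by move=> m H; rewrite mem_undup !mem_cat H.
rewrite scaler_sumr; apply: eq_bigr => m _.
by rewrite mcoeffZ scalerA.
Qed.

Lemma phi0 : phi 0 = 0.
Proof. by rewrite -(scale0r (0 : {mpoly K[n.+1]})) phiZ scale0r. Qed.

Lemma phi_sum (I : Type) (r : seq I) (pr : pred I) (F : I -> {mpoly K[n.+1]}) :
  phi (\sum_(i <- r | pr i) F i) = \sum_(i <- r | pr i) phi (F i).
Proof. exact: (big_morph phi phiD phi0). Qed.

Lemma phiX m : phi 'X_[m] = T m.
Proof. by rewrite /phi msuppX big_seq1 mcoeffX eqxx scale1r. Qed.

Definition EJ (J : {set 'I_n}) (x y : nat) : 'X_{1..n.+1} :=
  (\sum_(i < n) (if i \in J then U_(ord_max) *+ x else U_(wd i) *+ y))%MM.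

Lemma EJ_max J x y : EJ J x y ord_max = (#|J| * x)%N.
Proof.
rewrite /EJ mnm_sumE.
rewrite (eq_bigr (fun i => if i \in J then x else 0%N)); last first.
  move=> i _; case: (i \in J); rewrite mulmnE mnm1E ?eqxx ?mul1n //.
  have -> : (wd i == ord_max) = false by apply/negbTE; rewrite neq_ltn /= ltn_ord.
  by [].
by rewrite -big_mkcond sum_nat_const.
Qed.

Lemma EJ_wd J x y j : EJ J x y (wd j) = if j \in J then 0%N else y.
Proof.
rewrite /EJ mnm_sumE (bigD1 j) //= big1 ?addn0.
  case: (j \in J); rewrite mulmnE mnm1E ?eqxx ?mul1n //.
  have -> : (ord_max == wd j) = false by apply/negbTE; rewrite neq_ltn /= ltn_ord orbT.
  by [].
move=> i ij; case: (i \in J); rewrite mulmnE mnm1E.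
  have -> : (ord_max == wd j) = false by apply/negbTE; rewrite neq_ltn /= ltn_ord orbT.
  by [].
have -> : (wd i == wd j) = false by apply/negbTE; move: ij; apply: contra => /eqP[] /val_inj ->.
by [].
Qed.

Lemma expandX l :
  \prod_(i < n) ('X_[U_(wd i) *+ l] - 'X_[U_(ord_max) *+ l] : {mpoly K[n.+1]}) =
  \sum_(J : {set 'I_n}) (-1) ^+ #|J| *: 'X_[EJ J l l].
Proof.
under eq_bigr => i _ do rewrite addrC.
rewrite bigA_distr; apply: eq_bigr => J _.
rewrite /EJ (big_morph (fun m => 'X_[m] : {mpoly K[n.+1]}) (@mpolyXD _ _) (mpolyX0 _ _)).
rewrite (eq_bigr (fun i => ((-1) ^+ (i \in J)) *:
   'X_[if i \in J then U_(ord_max) *+ l else U_(wd i) *+ l]%MM)); last first.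
  by move=> i _; case: (i \in J); rewrite ?expr1 ?scaleN1r ?expr0 ?scale1r.
rewrite scaler_prod; congr (_ *: _).
rewrite (eq_bigr (fun i => if i \in J then -1 else 1)); last first.
  by move=> i _; case: (i \in J).
by rewrite -big_mkcond prodr_const.
Qed.

End Phi.
Arguments phi {K V} mu P a p.
Arguments T {K V} mu P a m.
Arguments wd {K V} a i.
Arguments EJ {K V} a J x y.


Section Main.
Variables (K : fieldType) (V : lmodType K) (h : int -> V -> Prop) (mu : seq V -> V) (N : V -> V).
Hypothesis HN : strict_homotopy_Nijenhuis h mu N.

Lemma lN : linear_fun N. Proof. by case: HN. Qed.

Lemma deg_iter k : deg0 h (iter k N).
Proof. case: HN => _ dN _; elim: k => [|k IH] d x hx //=; exact/dN/IH. Qed.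

Lemma Umax_wd (a : seq V) x (i : 'I_(size a)) : (U_(ord_max) *+ x)%MM (wd a i) = 0%N.
Proof.
rewrite mulmnE mnm1E.
have -> : (ord_max == wd a i) = false by apply/negbTE; rewrite neq_ltn /= ltn_ord orbT.
by [].
Qed.

Lemma Umax_max n x : (U_(@ord_max n) *+ x)%MM ord_max = x.
Proof. by rewrite mulmnE mnm1E eqxx mul1n. Qed.

Lemma stepA (a : seq V) (ds : seq int) m0 : (1 <= size a)%N -> homog_seq h a ds ->
  phi mu N a ('X_[m0] * \prod_(i < size a)
     ('X_[U_(wd a i) *+ 1] - 'X_[U_(ord_max) *+ 1])) = 0.
Proof.
move=> a1 [sa ha].
rewrite expandX mulr_sumr phi_sum.
under eq_bigr => J _ do rewrite -scalerAr -mpolyXD phiZ.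
set n := size a.
set b := [seq iter (m0 (wd a i)) N a`_i | i <- enum 'I_n].
have sb : size b = n by rewrite size_map size_enum_ord.
have bi : forall i : 'I_n, b`_i = iter (m0 (wd a i)) N a`_i by move=> i; rewrite nth_enum.
transitivity (iter (m0 ord_max) N (\sum_(J : {set 'I_n}) (-1) ^+ #|J| *: iter #|J| N
     (mu [seq (if i \in J then b`_i else N b`_i) | i <- enum 'I_n]))).
  rewrite (lin_sum _ _ _ (lin_iter _ lN)); apply: eq_bigr => J _.
  rewrite (linZ (lin_iter _ lN)); congr (_ *: _).
  rewrite phiX (@T_eq _ _ mu N a _ (m0 ord_max + #|J|)%N (fun i => m0 (wd a i) + (if i \in J then 0 else 1))%N).
  - rewrite iterD; congr (iter _ _ (iter _ _ (mu _))); apply: eq_map => i.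
    by rewrite bi; case: (i \in J); rewrite ?addn0 ?addn1.
  - by rewrite mnmDE EJ_max muln1.
  - by move=> i; rewrite mnmDE EJ_wd.
case: HN => _ _ H3.
rewrite SetForm //; last exact: lN.
have hb : homog_seq h b ds.
  split; first by rewrite sb.
  move=> j; rewrite sb => jn.
  have -> : b`_j = iter (m0 (wd a (Ordinal jn))) N a`_j by rewrite (bi (Ordinal jn)).
  by apply: deg_iter; apply: ha.
by rewrite -(H3 b ds) ?sb // subrr (lin0 (lin_iter _ lN)).
Qed.


Lemma Core (a : seq V) (ds : seq int) l (p : {mpoly K[(size a).+1]}) :
  (1 <= size a)%N -> homog_seq h a ds ->
  phi mu N a (\prod_(i < size a) ('X_[U_(wd a i) *+ l] - 'X_[U_(ord_max) *+ l]) * p) = 0.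
Proof.
move=> a1 ha.
have E : forall m : 'X_{1..(size a).+1}, 'X_[m *+ l] = ('X_[m *+ 1] : {mpoly K[(size a).+1]}) ^+ l.
  by move=> m; rewrite mpolyXn mulm1n.
under eq_bigr => i _ do rewrite !E subrXX.
rewrite big_split /= -mulrA.
set q := (_ * p).
rewrite (mpolyE q) mulr_sumr phi_sum big1 // => m _.
by rewrite -scalerAr phiZ mulrC (stepA _ a1 ha) scaler0.
Qed.

Lemma part1 k : strict_homotopy_Nijenhuis h mu (iter k N).
Proof.
split; [exact: lin_iter lN | exact: deg_iter |].
move=> a ds a1 ha.
apply/eqP; rewrite -subr_eq0 -(@SetForm _ _ _ _ a (size a)) //; last exact: lin_iter lN.
apply/eqP.
have := Core k 1 a1 ha; rewrite mulr1 expandX phi_sum => H.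
rewrite -[RHS]H; apply: eq_bigr => J _.
rewrite phiZ phiX (@T_eq _ _ mu N a _ (#|J| * k)%N (fun i => if i \in J then 0 else k)%N).
- rewrite iterM; congr (_ *: iter _ _ (mu _)); apply: eq_map => i; by case: (i \in J).
- exact: EJ_max.
- move=> i; exact: EJ_wd.
Qed.

Lemma part2 k l : strict_homotopy_Nijenhuis h (deformed mu (iter k N)) (iter l N).
Proof.
split; [exact: lin_iter lN | exact: deg_iter |].
move=> a ds a1 ha.
apply/eqP; rewrite -subr_eq0 -(@SetForm _ _ _ _ a (size a)) //; last exact: lin_iter lN.
apply/eqP.
set D : {mpoly K[(size a).+1]} := \sum_(Kk : {set 'I_(size a)} | Kk != set0)
   (-1) ^+ #|Kk|.-1 *: 'X_[(U_(ord_max) *+ (#|Kk|.-1 * k) + EJ a Kk 0 k)%MM].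
have := Core l D a1 ha; rewrite expandX mulr_suml phi_sum => H.
rewrite -[RHS]H; apply: eq_bigr => J _.
rewrite -scalerAl phiZ; congr (_ *: _).
rewrite (@deformedE _ _ _ _ _ (size a)); [| exact: lin_iter lN | by rewrite size_map size_enum_ord | exact a1].
rewrite /D mulr_sumr phi_sum (lin_sum _ _ _ (lin_iter _ (lin_iter _ lN))).
apply: eq_bigr => Kk _.
rewrite -scalerAr phiZ (linZ (lin_iter _ (lin_iter _ lN))); congr (_ *: _).
rewrite -mpolyXD phiX (@T_eq _ _ mu N a _ (#|J| * l + #|Kk|.-1 * k)%N
   (fun i => (if i \in J then 0 else l) + (if i \in Kk then 0 else k))%N).
- rewrite iterD !iterM; congr (iter _ _ (iter _ _ (mu _))); apply: eq_map => i.
  rewrite nth_enum; case: (i \in J); case: (i \in Kk) => //=; rewrite ?addn0 ?add0n //.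
  by rewrite addnC iterD.
- by rewrite !mnmDE !EJ_max Umax_max muln0 addn0.
- by move=> i; rewrite !mnmDE !EJ_wd Umax_wd add0n.
Qed.

End Main.

Unset Implicit Arguments.

Theorem theorem6p15 (K : fieldType) (V : lmodType K) (h : int -> V -> Prop)
    (mu : seq V -> V) (N : V -> V) :
  [pchar K] =i pred0 -> is_grading h -> is_Ainf h mu ->
  strict_homotopy_Nijenhuis h mu N ->
  (forall k : nat, strict_homotopy_Nijenhuis h mu (iter k N)) /\
  (forall k l : nat, strict_homotopy_Nijenhuis h (deformed mu (iter k N)) (iter l N)).
Proof.
move=> _ _ _ HN; split.
  by move=> k; exact: part1.
by move=> k l; exact: part2.
Qed.
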